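(* Let $A\in\mathbb{R}^{n\times n}$, $B\in\mathbb{R}^{n\times m}$, $Q=Q^T\succeq0$, $R=R^T\succ0$, and $\Gamma(X)=A^TX+XA+Q$. There exist $P\in\mathbb{R}^{n\times n}$ and a symmetric $\bar P\succ0$ such that $$\begin{bmatrix}-\Gamma(\bar P) & (P+P^T-\bar P-\bar P^T)B\\ B^T(P+P^T-\bar P-\bar P^T) & 4R\end{bmatrix}\succ0$$ if and only if $A$ is Hurwitz.
   Context: Matrix inequalities are in the Loewner sense (symmetric matrices). *)

(* Defs.v *)
(* Real matrices over an arbitrary real closed field R
   (covers the reals; the statement is first-order algebraic).
   Eigenvalues are taken in the algebraic closure R[i] (mathcomp-real-closed). *)
From HB Require Import structures.
From mathcomp Require Import all_boot all_order all_algebra.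
From mathcomp Require Import complex.
Set Implicit Arguments. Unset Strict Implicit. Unset Printing Implicit Defensive.
Import Order.TTheory GRing.Theory Num.Theory.
Local Open Scope ring_scope.

Definition posdef (R : realFieldType) (n : nat) (M : 'M[R]_n) : Prop :=
  M^T = M /\ forall x : 'cV[R]_n, x != 0 -> 0 < (x^T *m M *m x) 0 0.

Definition possemidef (R : realFieldType) (n : nat) (M : 'M[R]_n) : Prop :=
  M^T = M /\ forall x : 'cV[R]_n, 0 <= (x^T *m M *m x) 0 0.

Definition Gamma (R : realFieldType) (n : nat) (A Q X : 'M[R]_n) : 'M[R]_n :=
  A^T *m X + X *m A + Q.

Definition hurwitz (R : rcfType) (n : nat) (A : 'M[R]_n) : Prop :=
  forall lambda : R[i],
    eigenvalue (map_mx (fun r : R => (r%:C)%C) A) lambda -> Re lambda < 0.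

(* Main.v *)
Require Import Defs.
From HB Require Import structures.
From mathcomp Require Import all_boot all_order all_algebra.
From mathcomp Require Import complex sesquilinear spectral.
From mathcomp Require Import ring lra.
Import Order.TTheory GRing.Theory Num.Theory.
Local Open Scope ring_scope.
Local Open Scope sesquilinear_scope.
Set Implicit Arguments. Unset Strict Implicit. Unset Printing Implicit Defensive.
Section S.
Variable R : rcfType.
Local Notation C := R[i].
Local Notation phi := (real_complex R).

Lemma quad_sum n (u v : 'cV[C]_n) (M : 'M[C]_n) :
  (u^t* *m M *m v) 0 0 = \sum_i \sum_j (u i 0)^* * M i j * v j 0.
Proof.
rewrite mxE; under eq_bigr do rewrite mxE big_distrl /=.
rewrite exchange_big /=; apply: eq_bigr => i _; apply: eq_bigr => j _.
by rewrite !mxE.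
Qed.

Lemma conj_phi (r : R) : (phi r)^* = phi r.
Proof. by apply: conj_Creal; rewrite complex_real. Qed.

Lemma map_phi_conj m n (x : 'M[R]_(m, n)) : map_mx Num.conj (map_mx phi x) = map_mx phi x.
Proof. by apply/matrixP => i j; rewrite !mxE conj_phi. Qed.

Lemma phi_tc m n (x : 'M[R]_(m, n)) : (map_mx phi x)^t* = (map_mx phi x)^T.
Proof. by rewrite map_trmx map_phi_conj. Qed.

Lemma cV_decomp n (z : 'cV[C]_n) :
  z = map_mx phi (map_mx (@complex.Re R) z) + 'i *: map_mx phi (map_mx (@complex.Im R) z).
Proof.
apply/matrixP => i j; rewrite !mxE; rewrite [LHS]complexE.
by rewrite complexiE mulrC.
Qed.

Lemma entry_tr (M : 'M[C]_1) : M^T 0 0 = M 0 0.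
Proof. by rewrite mxE. Qed.

Lemma herm_form_xy n (M : 'M[R]_n) (x y : 'cV[R]_n) : M^T = M ->
  let z := map_mx phi x + 'i *: map_mx phi y in
  (z^t* *m map_mx phi M *m z) 0 0 =
  phi ((x^T *m M *m x) 0 0 + (y^T *m M *m y) 0 0).
Proof.
move=> MT z; rewrite /z.
set X := map_mx phi x; set Y := map_mx phi y; set M' := map_mx phi M.
have -> : (X + 'i *: Y)^t* = X^T - 'i *: Y^T.
  apply/matrixP => i j; rewrite !mxE rmorphD rmorphM /= conjCi !conj_phi.
  by rewrite mulNr.
have sym : (Y^T *m M' *m X) 0 0 = (X^T *m M' *m Y) 0 0.
  have MT' : M'^T = M' by rewrite /M' map_trmx MT.
  by rewrite -entry_tr !trmx_mul trmxK MT' mulmxA.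
rewrite !(mulmxDl, mulmxDr, mulmxBl, mulmxBr, mulNmx, mulmxN).
rewrite -!scalemxAl -!scalemxAr.
have -> : (X^T *m M' *m X) = map_mx phi (x^T *m M *m x) by rewrite !map_mxM map_trmx.
have -> : (Y^T *m M' *m Y) = map_mx phi (y^T *m M *m y) by rewrite !map_mxM map_trmx.
move: sym; move: (Y^T *m M' *m X) (X^T *m M' *m Y) (x^T *m M *m x) (y^T *m M *m y).
move=> a b c d sym.
rewrite !mxE sym rmorphD.
have ii : 'i * 'i = -1 :> C by rewrite -expr2 sqrCi.
rewrite mulrA ii; ring.
Qed.

Lemma herm_form n (M : 'M[R]_n) (z : 'cV[C]_n) : M^T = M ->
  (z^t* *m map_mx phi M *m z) 0 0 =
  phi (((map_mx (@complex.Re R) z)^T *m M *m map_mx (@complex.Re R) z) 0 0 +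
       ((map_mx (@complex.Im R) z)^T *m M *m map_mx (@complex.Im R) z) 0 0).
Proof.
move=> MT; have := @herm_form_xy n M (map_mx (@complex.Re R) z) (map_mx (@complex.Im R) z) MT.
by rewrite /= -cV_decomp.
Qed.


Lemma posdef_ge0 n (M : 'M[R]_n) (x : 'cV[R]_n) : posdef M -> 0 <= (x^T *m M *m x) 0 0.
Proof.
move=> [_ pM]; have [->|nz] := eqVneq x 0; last by apply/ltW/pM.
by rewrite mulmx0 mxE.
Qed.

Lemma cV_decomp0 n (z : 'cV[C]_n) :
  map_mx (@complex.Re R) z = 0 -> map_mx (@complex.Im R) z = 0 -> z = 0.
Proof. by move=> h1 h2; rewrite [z]cV_decomp h1 h2 !map_mx0 scaler0 addr0. Qed.

Lemma posdef_cform n (M : 'M[R]_n) (z : 'cV[C]_n) : posdef M -> z != 0 ->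
  exists2 r, (z^t* *m map_mx phi M *m z) 0 0 = phi r & 0 < r.
Proof.
move=> pM nz; have [MT pos] := pM; rewrite herm_form //; eexists; first by [].
have [x0|xn0] := eqVneq (map_mx (@complex.Re R) z) 0.
  have [y0|yn0] := eqVneq (map_mx (@complex.Im R) z) 0.
    by move: nz; rewrite (cV_decomp0 x0 y0) eqxx.
  by rewrite ltr_wpDl ?posdef_ge0 ?pos.
by rewrite ltr_wpDr ?posdef_ge0 ?pos.
Qed.

Lemma psd_cform n (M : 'M[R]_n) (z : 'cV[C]_n) : possemidef M ->
  exists2 r, (z^t* *m map_mx phi M *m z) 0 0 = phi r & 0 <= r.
Proof.
move=> [MT pos]; rewrite herm_form //; eexists; first by [].
by rewrite addr_ge0 ?pos.
Qed.

Lemma col_eigen n (M : 'M[C]_n) l : eigenvalue M l ->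
  exists2 z : 'cV[C]_n, z != 0 & M *m z = l *: z.
Proof.
move=> /eigenvalueP [v vM vn0].
have : \det (M - l%:M) == 0.
  apply/det0P; exists v => //; by rewrite mulmxBr vM mul_mx_scalar subrr.
rewrite -det_tr => /det0P [w wn0 wM].
exists w^T; first by rewrite -(inj_eq (@trmx_inj _ _ _)) trmxK trmx0.
apply/eqP; rewrite -subr_eq0 -mul_scalar_mx -mulmxBl.
by rewrite -(inj_eq (@trmx_inj _ _ _)) trmx_mul trmxK wM trmx0.
Qed.

Lemma scale_entry m n (a : C) (M : 'M[C]_(m, n)) i j : (a *: M) i j = a * M i j.
Proof. by rewrite mxE. Qed.

Definition qf n (z : 'cV[C]_n) (M : 'M[C]_n) := (z^t* *m M *m z) 0 0.

Lemma qfD n (z : 'cV[C]_n) M N : qf z (M + N) = qf z M + qf z N.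
Proof. by rewrite /qf mulmxDr mulmxDl mxE. Qed.

Lemma qfN n (z : 'cV[C]_n) M : qf z (- M) = - qf z M.
Proof. by rewrite /qf mulmxN mulNmx mxE. Qed.

Lemma lyap_hurwitz n (A P Q : 'M[R]_n) : posdef P -> possemidef Q ->
  posdef (- Gamma A Q P) -> hurwitz A.
Proof.
move=> pP pQ pS l /col_eigen [z zn0 Az].
have [p Pz p0] := posdef_cform pP zn0.
have [q Qz q0] := psd_cform z pQ.
have [s Sz s0] := posdef_cform pS zn0.
set Ac := map_mx phi A in Az.
have e1 : map_mx phi (- Gamma A Q P) =
   - ((Ac^T *m map_mx phi P + map_mx phi P *m Ac) + map_mx phi Q).
  by rewrite /Gamma !raddfN /= !raddfD /= !map_mxM map_trmx.
move: Sz Pz Qz; rewrite -!/(qf _ _) e1 qfN !qfD => Sz Pz Qz.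
have e2 : qf z (Ac^T *m map_mx phi P) = l^* * phi p.
  have h : z^t* *m Ac^T = l^* *: z^t*.
    have h1 : z^T *m Ac^T = l *: z^T by rewrite -trmx_mul Az linearZ.
    have := congr1 (map_mx Num.conj) h1.
    rewrite map_mxM /Ac phi_tc => h2.
    etransitivity; first exact: h2.
    apply/matrixP. move=> i j. rewrite !mxE. rewrite rmorphM. by [].
  by rewrite -Pz /qf mulmxA h -!scalemxAl scale_entry.
have e3 : qf z (map_mx phi P *m Ac) = l * phi p.
  by rewrite -Pz /qf -!mulmxA Az -!scalemxAr scale_entry.
set r := complex.Re l.
have hr : l^* + l = phi (2 * r).
  rewrite rmorphM /= rmorph_nat addrC -[l + l^*](@divfK _ 2) ?pnatr_eq0 // -ReE /r complexRe mulrC.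
  by [].
move: Sz; rewrite e2 e3 Qz -mulrDl hr -!rmorphM -rmorphD -rmorphN => /complexI Sz.
have rn : r < 0 by nra.
by rewrite -complexRe -/r -(rmorph0 phi) ltcR.
Qed.


Lemma trig_ex n (M : 'M[C]_n) :
  exists2 S : 'M[C]_n, S \in unitmx & is_trig_mx (S *m M *m invmx S).
Proof.
case: n M => [|n] M.
  exists 1%:M; first by rewrite unitmx1.
  by apply/is_trig_mxP => -[].
have [S Su] := @Schur C n.+1 M isT.
exists S; first exact: unitarymx_unit.
by rewrite -conjumx // unitarymx_unit.
Qed.

Lemma trig_eig n (M S : 'M[C]_n) i : S \in unitmx ->
  is_trig_mx (S *m M *m invmx S) -> eigenvalue M ((S *m M *m invmx S) i i).
Proof.
set T := S *m M *m invmx S => Su Tt.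
have : eigenvalue T (T i i).
  rewrite eigenvalue_root_char char_poly_trig // /root horner_prod.
  by apply/prodf_eq0; exists i => //; rewrite hornerXsubC subrr.
move=> /eigenvalueP [v vT vn0]; apply/eigenvalueP; exists (v *m S).
  have -> : v *m S *m M = v *m T *m S by rewrite /T !mulmxA mulmxKV.
  by rewrite vT scalemxAl.
by apply: contraNneq vn0 => h; rewrite -(mulmxK Su v) h mul0mx.
Qed.

Definition nc (z : C) : R := ComplexField.Normc.normc z.

Lemma ncE z : `|z| = phi (nc z). Proof. by []. Qed.

Lemma nc_ge0 z : 0 <= nc z.
Proof. by rewrite -(@lecR R) -ncE; apply: normr_ge0. Qed.

Lemma ncM a b : nc (a * b) = nc a * nc b.
Proof. by apply: (@complexI R); rewrite rmorphM -!ncE normrM. Qed.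

Lemma nc_conj a : nc a^* = nc a.
Proof. by apply: (@complexI R); rewrite -!ncE norm_conjC. Qed.

Lemma nc_phi r : nc (phi r) = `|r|.
Proof.
rewrite /nc /ComplexField.Normc.normc /= expr0n /= addr0.
by rewrite sqrtr_sqr.
Qed.

Lemma nc0 : nc 0 = 0.
Proof. by rewrite -(rmorph0 phi) nc_phi normr0. Qed.

Lemma nc_sum (I : finType) (f : I -> C) : nc (\sum_i f i) <= \sum_i nc (f i).
Proof. by rewrite -(@lecR R) -ncE rmorph_sum /=; apply: ler_norm_sum. Qed.

Lemma Re_le_nc z : complex.Re z <= nc z.
Proof.
apply: le_trans (ler_norm _) _.
by rewrite -(@lecR R) -ncE; apply: normc_ge_Re.
Qed.

Lemma ReD (a b : C) : complex.Re (a + b) = complex.Re a + complex.Re b.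
Proof. by case: a; case: b. Qed.

Lemma Re0 : complex.Re (0 : C) = 0. Proof. by []. Qed.

Lemma ReN (a : C) : complex.Re (- a) = - complex.Re a.
Proof. by case: a. Qed.

Lemma Re_sum (I : finType) (f : I -> C) :
  complex.Re (\sum_i f i) = \sum_i complex.Re (f i).
Proof. exact: (big_morph _ ReD Re0). Qed.

Lemma Re_mulphi (t : C) r : complex.Re (t * phi r) = complex.Re t * r.
Proof. by case: t => a b /=; rewrite mulr0 subr0. Qed.

Lemma Re_phimul (t : C) r : complex.Re (phi r * t) = r * complex.Re t.
Proof. by rewrite mulrC Re_mulphi mulrC. Qed.

Lemma Re_conj (t : C) : complex.Re t^* = complex.Re t.
Proof. by case: t. Qed.

Lemma Re_phi r : complex.Re (phi r) = r. Proof. by []. Qed.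

Lemma conj_mul_self (a : C) : a^* * a = phi (nc a ^+ 2).
Proof. by rewrite -normCKC ncE rmorphXn. Qed.

Lemma quad_sumT (K : comNzRingType) n (x y : 'cV[K]_n) (M : 'M[K]_n) :
  (x^T *m M *m y) 0 0 = \sum_i \sum_j x i 0 * M i j * y j 0.
Proof.
rewrite mxE; under eq_bigr do rewrite mxE big_distrl /=.
rewrite exchange_big /=; apply: eq_bigr => i _; apply: eq_bigr => j _.
by rewrite !mxE.
Qed.

Definition sq n (u : 'cV[C]_n) : R := \sum_i nc (u i 0) ^+ 2.

Lemma sq_ge0 n (u : 'cV[C]_n) : 0 <= sq u.
Proof. by apply: sumr_ge0 => i _; apply: sqr_ge0. Qed.

Lemma sq_ge n (u : 'cV[C]_n) i : nc (u i 0) ^+ 2 <= sq u.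
Proof.
rewrite /sq (bigD1 i) //= lerDl; apply: sumr_ge0 => j _; exact: sqr_ge0.
Qed.

Lemma sq_gt0 n (u : 'cV[C]_n) : u != 0 -> 0 < sq u.
Proof.
move=> un0; have [i ui] : exists i, u i 0 != 0.
  apply/existsP; apply: contraR un0 => /existsPn h.
  by apply/eqP/matrixP => i j; rewrite ord1 mxE; apply/eqP/negbNE/h.
apply: lt_le_trans (sq_ge u i).
rewrite exprn_gt0 // lt_neqAle nc_ge0 andbT eq_sym.
by apply: contra ui => /eqP h; apply/eqP/ComplexField.Normc.eq0_normc.
Qed.

Lemma qf1 n (u : 'cV[C]_n) : (u^t* *m u) 0 0 = phi (sq u).
Proof.
rewrite mxE rmorph_sum; apply: eq_bigr => i _.
by rewrite !mxE conj_mul_self.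
Qed.

Lemma qf_bound n (u : 'cV[C]_n) (M : 'M[C]_n) :
  nc (qf u M) <= (\sum_i \sum_j nc (M i j)) * sq u.
Proof.
rewrite /qf quad_sum mulr_suml.
apply: le_trans (nc_sum _) _; apply: ler_sum => i _.
rewrite mulr_suml.
apply: le_trans (nc_sum _) _; apply: ler_sum => j _.
rewrite !ncM nc_conj.
have h1 := sq_ge u i; have h2 := sq_ge u j.
have g1 := nc_ge0 (u i 0); have g2 := nc_ge0 (u j 0); have g3 := nc_ge0 (M i j).
have : nc (u i 0) * nc (u j 0) <= sq u by nra.
move=> h; nra.
Qed.

Lemma qf_diag n (u : 'cV[C]_n) (r : 'rV[C]_n) :
  qf u (diag_mx r) = \sum_i (u i 0)^* * r 0 i * u i 0.
Proof.
rewrite /qf quad_sum; apply: eq_bigr => i _.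
rewrite (bigD1 i) //= big1 ?addr0; first by rewrite mxE eqxx mulr1n.
by move=> j /negPf ji; rewrite mxE eq_sym ji mulr0n mulr0 mul0r.
Qed.

Lemma lyap_core n (A : 'M[R]_n) : hurwitz A ->
  exists W, exists T', exists d : R, [/\ W \in unitmx, W *m map_mx phi A = T' *m W, 0 < d &
    forall u, complex.Re (qf u T') <= - d * sq u].
Proof.
move=> hA; set Ac := map_mx phi A.
have [S Su Tt] := trig_ex Ac; set T := S *m Ac *m invmx S in Tt.
have TS : T *m S = S *m Ac by rewrite /T mulmxKV.
have ReT i : complex.Re (T i i) < 0.
  have := hA _ (trig_eig i Su Tt).
  by rewrite -complexRe -(rmorph0 phi) ltcR.
clearbody T.
set d := \big[Num.min/1]_i (- complex.Re (T i i)).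
have d0 : 0 < d.
  apply: (big_ind (fun x => 0 < x)) => // [x y x0 y0|i _].
    by rewrite lt_min x0 y0.
  by rewrite oppr_gt0.
have dle i : d <= - complex.Re (T i i) by apply: bigmin_le.
set tau := \sum_i \sum_j nc (T i j).
have tau0 : 0 <= tau by apply: sumr_ge0 => i _; apply: sumr_ge0 => j _; apply: nc_ge0.
set e := d / (d + 2 * tau + 2).
have den0 : 0 < d + 2 * tau + 2 by lra.
have ee : e * (d + 2 * tau + 2) = d by rewrite /e divfK // lt0r_neq0.
have e0 : 0 < e by rewrite /e divr_gt0.
have e1 : e <= 1 by nra.
have etau : e * tau <= d / 2 by nra.
pose D : 'M[C]_n := diag_mx (\row_i phi (e ^+ i)).
pose T' := \matrix_(i, j) (phi (e ^+ i / e ^+ j) * T i j).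
have en0 k : e ^+ k != 0 by rewrite expf_neq0 // lt0r_neq0.
have DT : D *m T = T' *m D.
  apply/matrixP => i j; rewrite mul_diag_mx mul_mx_diag !mxE.
  by rewrite mulrAC -rmorphM /= divfK.
have Du : D \in unitmx.
  rewrite unitmxE det_diag unitfE; apply/prodf_neq0 => i _.
  by rewrite mxE fmorph_eq0.
exists (D *m S), T', (d / 2); split.
- by rewrite unitmx_mul Du Su.
- by rewrite -mulmxA -TS mulmxA DT -mulmxA.
- by rewrite divr_gt0.
move=> u.
set Dg := diag_mx (\row_i T i i).
have -> : T' = Dg + (T' - Dg) by rewrite addrC subrK.
rewrite qfD ReD.
have h1 : complex.Re (qf u Dg) <= - d * sq u.
  rewrite qf_diag Re_sum /sq mulr_sumr; apply: ler_sum => i _.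
  rewrite mxE mulrAC conj_mul_self Re_phimul.
  rewrite mulrC; apply: ler_wpM2r; first exact: sqr_ge0.
  by rewrite lerNr.
have h2 : \sum_i \sum_j nc ((T' - Dg) i j) <= e * tau.
  rewrite /tau mulr_sumr; apply: ler_sum => i _.
  rewrite mulr_sumr; apply: ler_sum => j _.
  rewrite !mxE.
  have [ij|ji|ij] := ltngtP i j.
  - have -> : T i j = 0 by move/is_trig_mxP: Tt; apply.
    rewrite mulr0 -val_eqE (ltn_eqF ij) mulr0n subr0.
    by rewrite nc0 mulr0.
  - rewrite eq_sym -val_eqE (ltn_eqF ji) mulr0n subr0 ncM nc_phi.
    apply: ler_wpM2r; first exact: nc_ge0.
    rewrite -expfB // ger0_norm; last by rewrite exprn_ge0 // ltW.
    rewrite -(subnSK ji) exprS -[leRHS]mulr1 ler_wpM2l ?(ltW e0) //.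
    by rewrite exprn_ile1 ?(ltW e0).
  - have -> : i = j by apply: val_inj.
    rewrite eqxx mulr1n divff // rmorph1 mul1r subrr.
    by rewrite nc0 mulr_ge0 ?nc_ge0 ?ltW.
have h3 : complex.Re (qf u (T' - Dg)) <= d / 2 * sq u.
  apply: le_trans (Re_le_nc _) _; apply: le_trans (qf_bound _ _) _.
  apply: ler_wpM2r; first exact: sq_ge0.
  exact: le_trans h2 etau.
have := sq_ge0 u; nra.
Qed.

Definition bf n (x : 'cV[R]_n) (M : 'M[R]_n) (y : 'cV[R]_n) := (x^T *m M *m y) 0 0.

Lemma bfD n (x y : 'cV[R]_n) M N : bf x (M + N) y = bf x M y + bf x N y.
Proof. by rewrite /bf mulmxDr mulmxDl mxE. Qed.

Lemma bfN n (x y : 'cV[R]_n) M : bf x (- M) y = - bf x M y.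
Proof. by rewrite /bf mulmxN mulNmx mxE. Qed.

Lemma bfZ n (x y : 'cV[R]_n) k M : bf x (k *: M) y = k * bf x M y.
Proof. by rewrite /bf -scalemxAr -scalemxAl mxE. Qed.

Lemma bf_Re n (x y : 'cV[R]_n) (M : 'M[C]_n) :
  bf x (map_mx (@complex.Re R) M) y =
  complex.Re (((map_mx phi x)^t* *m M *m map_mx phi y) 0 0).
Proof.
rewrite /bf quad_sumT quad_sum Re_sum; apply: eq_bigr => i _.
rewrite Re_sum; apply: eq_bigr => j _.
by rewrite !mxE conj_phi Re_mulphi Re_phimul.
Qed.

Lemma tcM m n p (X : 'M[C]_(m, n)) (Y : 'M[C]_(n, p)) : (X *m Y)^t* = Y^t* *m X^t*.
Proof. by rewrite trmx_mul map_mxM. Qed.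

Lemma tcK m n (X : 'M[C]_(m, n)) : X^t*^t* = X.
Proof. by apply/matrixP => i j; rewrite !mxE conjCK. Qed.

Lemma tc_qf n (v : 'cV[C]_n) M : ((M *m v)^t* *m v) 0 0 = (qf v M)^*.
Proof.
have h (X : 'M[C]_1) : (X^t*) 0 0 = (X 0 0)^* by rewrite !mxE.
transitivity (((v^t* *m M *m v)^t*) 0 0); last by rewrite h.
by rewrite !tcM tcK mulmxA.
Qed.

Lemma hurwitz_lyap n (A Q : 'M[R]_n) : hurwitz A -> possemidef Q ->
  exists Pb, posdef Pb /\ posdef (- Gamma A Q Pb).
Proof.
move=> hA [QT Qpos].
have [W [T' [d [Wu WA d0 Tb]]]] := lyap_core hA.
set Ac := map_mx phi A in WA.
pose N := W^t* *m W.
pose Q' := (invmx W)^t* *m map_mx phi Q *m invmx W.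
pose q := \sum_i \sum_j nc (Q' i j).
have q0 : 0 <= q by apply: sumr_ge0 => i _; apply: sumr_ge0 => j _; apply: nc_ge0.
pose k := (q + 1) / d.
have kd : k * d = q + 1 by rewrite /k divfK // lt0r_neq0.
have k0 : 0 < k by rewrite /k divr_gt0 // ltr_wpDl.
pose Pb := k *: map_mx (@complex.Re R) N.
pose u (x : 'cV[R]_n) := W *m map_mx phi x.
have Pbf x y : bf x Pb y = k * complex.Re (((u x)^t* *m u y) 0 0).
  by rewrite bfZ bf_Re /u tcM !mulmxA.
have PbT : Pb^T = Pb.
  rewrite /Pb linearZ /=; congr (_ *: _).
  apply/matrixP => i j; rewrite !mxE !Re_sum; apply: eq_bigr => l _.
  by rewrite !mxE -Re_conj rmorphM /= conjCK mulrC.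
have un0 x : x != 0 -> u x != 0.
  move=> xn0; apply: contra xn0 => /eqP ux0.
  have : map_mx phi x == 0 by rewrite -(mulKmx Wu (map_mx phi x)) -/(u x) ux0 mulmx0.
  by rewrite map_mx_eq0.
have uq x : complex.Re (((u x)^t* *m u x) 0 0) = sq (u x) by rewrite qf1.
exists Pb; split.
  split => // x xn0; rewrite -/(bf _ _ _) Pbf uq.
  by rewrite mulr_gt0 // sq_gt0 // un0.
split.
  rewrite /Gamma !raddfN /= !raddfD /= !trmx_mul trmxK PbT QT.
  by rewrite [- (Pb *m A) - _]addrC.
move=> x xn0; rewrite -/(bf _ _ _) /Gamma bfN !bfD.
have uA : u (A *m x) = T' *m u x.
  by rewrite /u map_mxM -/Ac [LHS]mulmxA WA -mulmxA.
have e1 : bf x (A^T *m Pb) x = k * complex.Re (qf (u x) T').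
  rewrite /bf mulmxA -trmx_mul -/(bf _ _ _) Pbf uA; congr (_ * _).
  by rewrite tc_qf Re_conj.
have e2 : bf x (Pb *m A) x = k * complex.Re (qf (u x) T').
  by rewrite /bf -!mulmxA mulmxA -/(bf _ _ _) Pbf uA /qf mulmxA.
have e3 : bf x Q x = complex.Re (qf (u x) Q').
  rewrite -[LHS](Re_phi) /bf.
  have -> : phi ((x^T *m Q *m x) 0 0) = (map_mx phi (x^T *m Q *m x)) 0 0 by move: (x^T *m Q *m x) => X; rewrite mxE.
  rewrite !map_mxM -map_trmx -phi_tc.
  have -> : map_mx phi x = invmx W *m u x by rewrite /u mulKmx.
  by rewrite tcM /qf /Q' !mulmxA.
have hq : complex.Re (qf (u x) Q') <= q * sq (u x).
  exact: le_trans (Re_le_nc _) (qf_bound _ _).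
have hT := Tb (u x).
have s0 := sq_gt0 (un0 x xn0).
rewrite e1 e2 e3; nra.
Qed.


Lemma posdef_block0 n m (M1 : 'M[R]_n) (M2 : 'M[R]_m) :
  posdef M1 -> posdef M2 -> posdef (block_mx M1 0 0 M2).
Proof.
move=> [T1 p1] [T2 p2]; split.
  by rewrite tr_block_mx T1 T2 !trmx0.
move=> x; rewrite -[x]vsubmxK; set x1 := usubmx x; set x2 := dsubmx x => xn0.
rewrite tr_col_mx mul_row_block !mulmx0 addr0 add0r mul_row_col mxE.
have [x10|x1n0] := eqVneq x1 0.
  have x2n0 : x2 != 0 by apply: contra xn0 => /eqP x20; rewrite x10 x20 col_mx0.
  by rewrite x10 trmx0 !mul0mx mxE add0r p2.
by rewrite ltr_wpDr ?p1 // posdef_ge0.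
Qed.

Lemma posdef_ul n m (M1 : 'M[R]_n) B C (M2 : 'M[R]_m) :
  posdef (block_mx M1 B C M2) -> posdef M1.
Proof.
move=> [T p]; split.
  by move: T; rewrite tr_block_mx => /eq_block_mx [].
move=> x xn0; have := p (col_mx x 0).
rewrite col_mx_eq0 negb_and xn0 => /(_ isT).
by rewrite tr_col_mx trmx0 mul_row_block !mul0mx !addr0 mul_row_col mulmx0 addr0.
Qed.

Lemma posdef_scale n (M : 'M[R]_n) k : 0 < k -> posdef M -> posdef (k *: M).
Proof.
move=> k0 [T p]; split; first by rewrite linearZ /= T.
by move=> x xn0; rewrite -scalemxAr -scalemxAl mxE mulr_gt0 ?p.
Qed.

End S.

Local Close Scope sesquilinear_scope.

Theorem theorem5 (R : rcfType) (n m : nat)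
  (A : 'M[R]_n) (B : 'M[R]_(n, m)) (Q : 'M[R]_n) (Rm : 'M[R]_m) :
  possemidef Q -> posdef Rm ->
  ((exists (P Pbar : 'M[R]_n),
      posdef Pbar /\
      posdef (block_mx (- Gamma A Q Pbar) ((P + P^T - Pbar - Pbar^T) *m B)
                       (B^T *m (P + P^T - Pbar - Pbar^T)) (4%:R *: Rm)))
   <-> hurwitz A).
Proof.
move=> pQ pR; split.
  move=> [P [Pb [pPb /posdef_ul pG]]].
  exact: lyap_hurwitz pPb pQ pG.
move=> hA; have [Pb [pPb pG]] := hurwitz_lyap hA pQ.
exists Pb, Pb; split => //.
have -> : Pb + Pb^T - Pb - Pb^T = 0 by rewrite addrAC addrK subrr.
rewrite mul0mx mulmx0; apply: posdef_block0 => //.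
by apply: posdef_scale.
Qed.
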